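(* For every integer $n\ge 1$, the polytope $\overline{Q}_n=\sum_{S\in\mathcal{I}_n}\Delta_S\subseteq\mathbb{R}^{n+1}$ is combinatorially equivalent to the $n$-th stellohedron $\mathrm{Stell}_n$.
   Context: Sums are Minkowski sums. $\mathcal{I}_n=\{S\cup\{n+1\}: S\subseteq[n],\ |S|\in\{1,2\}\}$ and, for $S\subseteq[n+1]$, $\Delta_S=\mathrm{conv}\{e_i: i\in S\}\subseteq\mathbb{R}^{n+1}$. Let $\mathrm{st}_n$ be the star graph on $[n+1]$ with edges $\{i,n+1\}$, $i=1,\dots,n$. The stellohedron is the graph associahedron of $\mathrm{st}_n$: $\mathrm{Stell}_n=\sum_{S}\Delta_S$, the sum over all nonempty $S\subseteq[n+1]$ inducing a connected subgraph of $\mathrm{st}_n$ (i.e. $S$ a singleton or $n+1\in S$). Two polytopes are combinatorially equivalent if their face posets (ordered by inclusion) are isomorphic. *)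

(* Defs.v *)
From HB Require Import structures.
From mathcomp Require Import all_boot all_order all_algebra.
From mathcomp Require Import reals.
Set Implicit Arguments. Unset Strict Implicit. Unset Printing Implicit Defensive.
Import Order.TTheory GRing.Theory Num.Theory.
Local Open Scope ring_scope.

Section Polytopes.
Variables (R : realType) (d : nat).

Definition pt := 'rV[R]_d.
Definition pset := pt -> Prop.

Definition subset_p (A B : pset) : Prop := forall x, A x -> B x.

Definition evec (i : 'I_d) : pt := \row_(j < d) (if j == i then 1 else 0).

Definition simplex (T : {set 'I_d}) : pset := fun x =>
  exists lam : 'I_d -> R,
    [/\ (forall i, 0 <= lam i), (forall i, i \notin T -> lam i = 0),
        \sum_(i < d) lam i = 1 & x = \sum_(i < d) lam i *: evec i].

Definition msum2 (A B : pset) : pset := fun x =>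
  exists a b, [/\ A a, B b & x = a + b].

Fixpoint msum_seq (l : seq pset) : pset :=
  match l with
  | [::] => fun x => x = 0
  | A :: l' => msum2 A (msum_seq l')
  end.

Definition simplex_sum (F : {set {set 'I_d}}) : pset :=
  msum_seq [seq simplex T | T <- enum F].

Definition dotp (c x : pt) : R := \sum_(i < d) c ord0 i * x ord0 i.

(* Faces of P: the empty set, and the sets of maximizers of a linear
   functional over P (c = 0 gives P itself). *)
Definition is_face (P F : pset) : Prop :=
  (forall x, ~ F x) \/
  exists c : pt, forall x, F x <-> (P x /\ forall y, P y -> dotp c y <= dotp c x).

End Polytopes.

Definition comb_equiv (R : realType) (d1 d2 : nat)
    (P : pset R d1) (Q : pset R d2) : Prop :=
  exists f : pset R d1 -> pset R d2,
    [/\ (forall F, is_face P F -> is_face Q (f F)),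
        (forall G, is_face Q G -> exists2 F, is_face P F & f F = G) &
        (forall F1 F2, is_face P F1 -> is_face P F2 ->
           (subset_p F1 F2 <-> subset_p (f F1) (f F2)))].

(* Index sets, with [n+1] identified with 'I_(n.+1) and n+1 with ord_max. *)
Definition calI (n : nat) : {set {set 'I_(n.+1)}} :=
  [set A :|: [set ord_max] | A in
     [set A : {set 'I_(n.+1)} | (ord_max \notin A) && ((#|A| == 1%N) || (#|A| == 2%N))]].

(* Nonempty S inducing a connected subgraph of the star graph st_n:
   singletons, or sets containing the centre n+1. *)
Definition stell_sets (n : nat) : {set {set 'I_(n.+1)}} :=
  [set A : {set 'I_(n.+1)} | (A != set0) && ((#|A| == 1%N) || (ord_max \in A))].

Definition Qbar (R : realType) (n : nat) : pset R n.+1 := simplex_sum (calI n).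
Definition Stell (R : realType) (n : nat) : pset R n.+1 := simplex_sum (stell_sets n).
Arguments Qbar R n : clear implicits.
Arguments Stell R n : clear implicits.

(* Main.v *)
Require Import Defs.
From mathcomp Require Import all_boot all_order all_algebra.
From mathcomp Require Import reals.
From Stdlib Require Import FunctionalExtensionality PropExtensionality.
Set Implicit Arguments. Unset Strict Implicit. Unset Printing Implicit Defensive.
Import Order.TTheory GRing.Theory Num.Theory.
Local Open Scope ring_scope.

Section Gen.
Variables (R : realType) (d : nat).
Implicit Types (c x y a b : pt R d) (T : {set 'I_d}) (s : seq {set 'I_d}).

Definition ismax c T i := (i \in T) && [forall j in T, c ord0 j <= c ord0 i].
Definition MS s : pset R d := msum_seq [seq simplex T | T <- s].
Definition argm (P : pset R d) c : pset R d :=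
  fun x => P x /\ forall y, P y -> dotp c y <= dotp c x.

Lemma ismaxP c T i :
  reflect (i \in T /\ forall j, j \in T -> c ord0 j <= c ord0 i) (ismax c T i).
Proof.
apply: (iffP andP) => [[-> /forall_inP H]|[-> H]]; split=> //; exact/forall_inP.
Qed.

Lemma evec_sum_entry (lam : 'I_d -> R) k :
  (\sum_(i < d) lam i *: evec R i) ord0 k = lam k.
Proof.
rewrite summxE (bigD1 k) //= !mxE eqxx mulr1 big1 ?addr0 // => j /negbTE Hj.
by rewrite !mxE eq_sym Hj mulr0.
Qed.

Lemma dotpD c a b : dotp c (a + b) = dotp c a + dotp c b.
Proof. by rewrite /dotp -big_split; apply: eq_bigr => i _; rewrite mxE mulrDr. Qed.

Lemma dotp0 c : dotp c 0 = 0.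
Proof. by rewrite /dotp big1 // => i _; rewrite mxE mulr0. Qed.

Lemma dotp_evec c i : dotp c (evec R i) = c ord0 i.
Proof.
rewrite /dotp (bigD1 i) //= !mxE eqxx mulr1 big1 ?addr0 // => j /negbTE Hj.
by rewrite !mxE Hj mulr0.
Qed.

Lemma simplex_evec T i : i \in T -> simplex T (evec R i).
Proof.
move=> iT; exists (fun j => if j == i then 1 else 0); split.
- by move=> j; case: ifP.
- by move=> j jT; case: eqP => // E; rewrite E iT in jT.
- by rewrite (bigD1 i) //= eqxx big1 ?addr0 // => j /negbTE ->.
- by apply/rowP => k; rewrite evec_sum_entry !mxE.
Qed.

Lemma simplex_le c T a i : simplex T a -> ismax c T i ->
  dotp c a <= c ord0 i /\
  (dotp c a = c ord0 i -> forall c' i', 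
      (forall j, ismax c T j -> ismax c' T j) -> ismax c' T i' ->
      dotp c' a = c' ord0 i').
Proof.
case=> lam [l0 lT l1 ->] /ismaxP [iT imax].
have Edot : forall c0, dotp c0 (\sum_(i < d) lam i *: evec R i) =
    \sum_(k < d) lam k * c0 ord0 k.
  by move=> c0; apply: eq_bigr => k _; rewrite evec_sum_entry mulrC.
have Ediff : c ord0 i - \sum_(k < d) lam k * c ord0 k =
    \sum_(k < d) lam k * (c ord0 i - c ord0 k).
  rewrite -[X in X - _]mul1r -l1 mulr_suml -sumrB.
  by apply: eq_bigr => k _; rewrite mulrBr.
have Hpos : forall k, 0 <= lam k * (c ord0 i - c ord0 k).
  move=> k; case: (boolP (k \in T)) => kT.
    by rewrite mulr_ge0 // subr_ge0 imax.
  by rewrite lT // mul0r.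
rewrite Edot; split.
  by rewrite -subr_ge0 Ediff sumr_ge0.
move=> Heq c' i' Hsub /ismaxP [i'T i'max].
rewrite Edot.
have Hz : \sum_(k < d) lam k * (c ord0 i - c ord0 k) = 0.
  by rewrite -Ediff Heq subrr.
have H0 := psumr_eq0P (fun k _ => Hpos k) Hz.
rewrite -[X in _ = X]mul1r -l1 mulr_suml; apply: eq_bigr => k _.
have [->|lk0] := eqVneq (lam k) 0; first by rewrite !mul0r.
have kT : k \in T by apply: contraNT lk0 => /lT ->.
have : c ord0 i - c ord0 k = 0.
  by move: (H0 k isT) => /eqP; rewrite mulf_eq0 (negbTE lk0) /= => /eqP.
move/eqP; rewrite subr_eq0 => /eqP Eik.
have /Hsub /ismaxP [_ km] : ismax c T k.
  by apply/ismaxP; split=> // j jT; rewrite -Eik imax.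
by congr (_ * _); apply/eqP; rewrite eq_le km // i'max.
Qed.


Lemma L1 s c g : (forall T, T \in s -> ismax c T (g T)) ->
  forall x, MS s x -> dotp c x <= \sum_(T <- s) c ord0 (g T).
Proof.
elim: s => [|T s IH] Hg x /=.
  by move=> ->; rewrite dotp0 big_nil.
case=> a [b [Ha Hb ->]]; rewrite dotpD big_cons lerD //.
  by case: (simplex_le Ha (Hg T (mem_head _ _))).
by apply: IH => // T' T's; apply: Hg; rewrite in_cons T's orbT.
Qed.

Lemma L2 s g : (forall T, T \in s -> g T \in T) ->
  MS s (\sum_(T <- s) evec R (g T)) /\
  forall c, dotp c (\sum_(T <- s) evec R (g T)) = \sum_(T <- s) c ord0 (g T).
Proof.
elim: s => [|T s IH] Hg.
  rewrite !big_nil; split; first by [].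
  by move=> c; rewrite dotp0 big_nil.
have [IH1 IH2] : MS s (\sum_(T <- s) evec R (g T)) /\
  forall c, dotp c (\sum_(T <- s) evec R (g T)) = \sum_(T <- s) c ord0 (g T).
  by apply: IH => T' T's; apply: Hg; rewrite in_cons T's orbT.
rewrite !big_cons; split.
  exists (evec R (g T)), (\sum_(T <- s) evec R (g T)); split=> //.
  by apply: simplex_evec; apply: Hg; rewrite mem_head.
by move=> c; rewrite dotpD dotp_evec IH2 big_cons.
Qed.

Lemma L3 s c c' g g' : (forall T, T \in s -> ismax c T (g T)) ->
  (forall T, T \in s -> ismax c' T (g' T)) ->
  (forall T, T \in s -> forall j, ismax c T j -> ismax c' T j) ->
  forall x, MS s x -> dotp c x = \sum_(T <- s) c ord0 (g T) ->
  dotp c' x = \sum_(T <- s) c' ord0 (g' T).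
Proof.
elim: s => [|T s IH] Hg Hg' Hc x /=.
  by move=> -> _; rewrite dotp0 big_nil.
have sub : forall T', T' \in s -> T' \in T :: s.
  by move=> T' T's; rewrite in_cons T's orbT.
case=> a [b [Ha Hb ->]]; rewrite !dotpD !big_cons => Heq.
have [Ha1 Ha2] := simplex_le Ha (Hg T (mem_head _ _)).
have Hb1 := L1 (fun T' H => Hg T' (sub T' H)) Hb.
have Ea : dotp c a = c ord0 (g T).
  apply/eqP; rewrite eq_le Ha1 /= -(lerD2r (dotp c b)) Heq lerD2l //.
have Eb : dotp c b = \sum_(T <- s) c ord0 (g T).
  by move: Heq; rewrite Ea => /addrI.
rewrite (Ha2 Ea c' (g' T) (Hc T (mem_head _ _)) (Hg' T (mem_head _ _))).
congr (_ + _); apply: IH => //.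
- by move=> T' H; apply: Hg; apply: sub.
- by move=> T' H; apply: Hg'; apply: sub.
- by move=> T' H; apply: Hc; apply: sub.
Qed.

Lemma L4 s c' g g'' : (forall T, T \in s -> g T \in T) ->
  (forall T, T \in s -> ismax c' T (g'' T)) ->
  \sum_(T <- s) c' ord0 (g T) = \sum_(T <- s) c' ord0 (g'' T) ->
  forall T0, T0 \in s -> c' ord0 (g T0) = c' ord0 (g'' T0).
Proof.
elim: s => [|T s IH] Hg Hg'' Heq T0 //.
have sub : forall T', T' \in s -> T' \in T :: s.
  by move=> T' T's; rewrite in_cons T's orbT.
move: Heq; rewrite !big_cons => Heq.
have le1 : c' ord0 (g T) <= c' ord0 (g'' T).
  by case/ismaxP: (Hg'' T (mem_head _ _)) => _ ->; rewrite ?Hg ?mem_head.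
have le2 : \sum_(T <- s) c' ord0 (g T) <= \sum_(T <- s) c' ord0 (g'' T).
  rewrite [X in X <= _]big_seq [X in _ <= X]big_seq; apply: ler_sum => T' T's.
  by case/ismaxP: (Hg'' T' (sub _ T's)) => _ ->; rewrite ?Hg ?sub.
have E1 : c' ord0 (g T) = c' ord0 (g'' T).
  apply/eqP; rewrite eq_le le1 /= -(lerD2r (\sum_(T <- s) c' ord0 (g T))) Heq lerD2l //.
have E2 : \sum_(T <- s) c' ord0 (g T) = \sum_(T <- s) c' ord0 (g'' T).
  by move: Heq; rewrite E1 => /addrI.
rewrite in_cons => /orP [/eqP -> //|T0s].
apply: IH => //.
- by move=> T' H; apply: Hg; apply: sub.
- by move=> T' H; apply: Hg''; apply: sub.
Qed.

Lemma exists_max c T : T != set0 -> exists i, ismax c T i.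
Proof.
case/set0Pn => j jT.
case: (arg_maxP (fun i => c ord0 i) jT) => i iT H.
by exists i; apply/ismaxP; split=> // k kT; apply: H.
Qed.

Lemma exists_g (i0 : 'I_d) c s : (forall T, T \in s -> T != set0) ->
  exists g, forall T, T \in s -> ismax c T (g T).
Proof.
move=> hne; exists (fun T => odflt i0 [pick i | ismax c T i]) => T Ts.
case: pickP => //= H; have [i Hi] := exists_max c (hne T Ts).
by rewrite H in Hi.
Qed.

Lemma ismax_in c T i : ismax c T i -> i \in T.
Proof. by case/andP. Qed.

Lemma argm_char s c g : (forall T, T \in s -> ismax c T (g T)) ->
  forall x, argm (MS s) c x <-> MS s x /\ dotp c x = \sum_(T <- s) c ord0 (g T).
Proof.
move=> Hg x.
have [P1 P2] := L2 (fun T H => ismax_in (Hg T H)).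
split.
  case=> Hx Hmax; split=> //; apply/eqP; rewrite eq_le (L1 Hg Hx) /=.
  by rewrite -P2; apply: Hmax.
case=> Hx Heq; split=> // y Hy; rewrite Heq; exact: L1 Hg y Hy.
Qed.

Lemma argm_ne (i0 : 'I_d) s c : (forall T, T \in s -> T != set0) ->
  exists x, argm (MS s) c x.
Proof.
move=> hne; have [g Hg] := exists_g i0 c hne.
have [P1 P2] := L2 (fun T H => ismax_in (Hg T H)).
by exists (\sum_(T <- s) evec R (g T)); apply/(argm_char Hg).
Qed.

Lemma key (i0 : 'I_d) s c c' : (forall T, T \in s -> T != set0) ->
  subset_p (argm (MS s) c) (argm (MS s) c') <->
  (forall T, T \in s -> forall j, ismax c T j -> ismax c' T j).
Proof.
move=> hne; have [g Hg] := exists_g i0 c hne; have [g' Hg'] := exists_g i0 c' hne.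
split; last first.
  move=> Hc x /(argm_char Hg) [Hx Heq]; apply/(argm_char Hg'); split=> //.
  exact: L3 Hg Hg' Hc x Hx Heq.
move=> Hsub T0 T0s j Hj.
pose h T := if T == T0 then j else g T.
have Hh : forall T, T \in s -> ismax c T (h T).
  by move=> T Ts; rewrite /h; case: eqP => [->|_] //; apply: Hg.
have [P1 P2] := L2 (fun T H => ismax_in (Hh T H)).
have /Hsub /(argm_char Hg') [_ E] : argm (MS s) c (\sum_(T <- s) evec R (h T)).
  by apply/(argm_char Hh).
rewrite P2 in E.
have := L4 (fun T H => ismax_in (Hh T H)) Hg' E T0s.
rewrite /h eqxx => Ej.
case/ismaxP: (Hg' T0 T0s) => _ Hm; apply/ismaxP; split; first exact: ismax_in Hj.
by move=> k kT; rewrite Ej; apply: Hm.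
Qed.

End Gen.

Section Spec.
Variables (R : realType) (n : nat).

Lemma calI_mem (A : {set 'I_n.+1}) : (@ord_max n) \notin A -> (#|A| == 1%N) || (#|A| == 2%N) ->
  A :|: [set (@ord_max n)] \in calI n.
Proof. by move=> H1 H2; apply/imsetP; exists A => //; rewrite inE H1 H2. Qed.

Lemma calI_char (T : {set 'I_n.+1}) : T \in calI n -> (@ord_max n) \in T.
Proof. by case/imsetP => A _ ->; rewrite in_setU set11 orbT. Qed.

Lemma calI_stell (T : {set 'I_n.+1}) : T \in calI n -> T \in stell_sets n.
Proof.
move=> /calI_char HN; rewrite inE HN orbT andbT; apply/set0Pn; by exists (@ord_max n).
Qed.

Lemma pairU (T : {set 'I_n.+1}) (j k : 'I_n.+1) : j != k -> j \in T -> k \in T -> (@ord_max n) \in T ->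
  exists2 U, U \in calI n & [/\ j \in U, k \in U & U \subset T].
Proof.
move=> jk jT kT NT.
have [jN|jN] := eqVneq j (@ord_max n).
  exists ([set k] :|: [set (@ord_max n)]).
    apply: calI_mem; last by rewrite cards1.
    by rewrite in_set1 -jN.
  split; [by rewrite !inE jN eqxx orbT | by rewrite !inE eqxx |].
  by apply/subsetP => x; rewrite !inE => /orP [] /eqP ->.
have [kN|kN] := eqVneq k (@ord_max n).
  exists ([set j] :|: [set (@ord_max n)]).
    apply: calI_mem; last by rewrite cards1.
    by rewrite in_set1 -kN eq_sym.
  split; [by rewrite !inE eqxx | by rewrite !inE kN eqxx orbT |].
  by apply/subsetP => x; rewrite !inE => /orP [] /eqP ->.
exists ([set j; k] :|: [set (@ord_max n)]).
  apply: calI_mem; last by rewrite cards2 jk orbT.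
  by rewrite in_set2 negb_or eq_sym jN eq_sym kN.
split; [by rewrite !inE eqxx | by rewrite !inE eqxx orbT |].
by apply/subsetP => x; rewrite !inE => /orP [/orP [] | ] /eqP ->.
Qed.

Lemma comb (c c' : pt R n.+1) :
  (forall T, T \in enum (calI n) -> forall j, ismax c T j -> ismax c' T j) <->
  (forall T, T \in enum (stell_sets n) -> forall j, ismax c T j -> ismax c' T j).
Proof.
split=> H T; rewrite mem_enum => HT j Hj; last first.
  by apply: H => //; rewrite mem_enum calI_stell.
case/ismaxP: Hj => jT jm; apply/ismaxP; split=> // k kT.
have [->|kj] := eqVneq k j; first by [].
move: HT; rewrite inE => /andP [_ /orP [/cards1P [x Tx]|NT]].
  by move: jT kT; rewrite Tx !in_set1 => /eqP -> /eqP ->.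
have jk : j != k by rewrite eq_sym.
have [U UI [jU kU UT]] := pairU jk jT kT NT.
have : ismax c U j.
  apply/ismaxP; split=> // l lU; apply: jm; exact: (subsetP UT).
move/(H U); rewrite mem_enum => /(_ UI) /ismaxP [_ ->] //.
Qed.

End Spec.

Theorem mainTheorem13 (R : realType) (n : nat) (hn : (1 <= n)%N) :
  comb_equiv (Qbar R n) (Stell R n).
Proof.
pose P := MS (R:=R) (enum (calI n)); pose Q := MS (R:=R) (enum (stell_sets n)).
have neP : forall T, T \in enum (calI n) -> T != set0.
  by move=> T; rewrite mem_enum => /calI_char NT; apply/set0Pn; exists ord_max.
have neQ : forall T, T \in enum (stell_sets n) -> T != set0.
  by move=> T; rewrite mem_enum inE => /andP [].
have keyPQ : forall c c', subset_p (argm P c) (argm P c') <->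
                         subset_p (argm Q c) (argm Q c').
  move=> c c'; rewrite (key ord0 c c' neP) (key ord0 c c' neQ); exact: comb.
pose f (F : pset R n.+1) : pset R n.+1 :=
  fun y => exists c, (forall x, F x <-> argm P c x) /\ argm Q c y.
have f_argm : forall F c, (forall x, F x <-> argm P c x) ->
    forall y, f F y <-> argm Q c y.
  move=> F c HF y; split; last by move=> Hy; exists c.
  case=> c0 [HF0 Hy]; apply: (proj1 (keyPQ c0 c)) Hy.
  by move=> x /HF0 /HF.
have f_empty : forall F, (forall x, ~ F x) -> forall y, ~ f F y.
  move=> F HF y [c [HFc _]]; have [x Hx] := argm_ne ord0 c neP.
  by apply: (HF x); apply/HFc.
have fe : forall (A B : pset R n.+1), (forall x, A x <-> B x) -> A = B.
  move=> A B H; apply: functional_extensionality => x.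
  by apply: propositional_extensionality.
have PQ : Qbar R n = P by [].
have QQ : Stell R n = Q by [].
exists f; split.
- move=> F; rewrite PQ QQ; case=> [HF|[c HF]].
    by left; apply: f_empty.
  by right; exists c; apply: f_argm.
- move=> G; rewrite PQ QQ; case=> [HG|[c HG]].
    exists G; first by left.
    by apply: fe => y; split=> [/(f_empty _ HG)|/HG].
  exists (argm P c); first by right; exists c.
  apply: fe => y; rewrite (f_argm (argm P c) c (fun x => conj id id)).
  by split=> /HG.
- move=> F1 F2; rewrite PQ => H1 H2.
  case: H1 => [E1|[c1 H1]].
    split=> _ x; [by move/(f_empty _ E1)|by move/E1].
  have [x1 Hx1] := argm_ne ord0 c1 neP.
  case: H2 => [E2|[c2 H2]].
    split=> H x.
      by exfalso; apply: (E2 x1); apply: H; apply/H1.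
    by exfalso; have [y Hy] := argm_ne ord0 c1 neQ;
       apply: (f_empty _ E2 y); apply: H; apply/(f_argm _ _ H1).
  have E : subset_p F1 F2 <-> subset_p (argm P c1) (argm P c2).
    by split=> H x Hx; [apply/H2; apply: H; apply/H1 | apply/H2; apply: H; apply/H1].
  have E' : subset_p (f F1) (f F2) <-> subset_p (argm Q c1) (argm Q c2).
    split=> H x Hx.
      by apply/(f_argm _ _ H2); apply: H; apply/(f_argm _ _ H1).
    by apply/(f_argm _ _ H2); apply: H; apply/(f_argm _ _ H1).
  by rewrite E E'; exact: keyPQ.
Qed.
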